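(* Let $X_n:\Omega\to\mathbb{R}$, $n\in\mathbb{N}$, and $X:\Omega\to\mathbb{R}$ be discrete random variables with $X_n\to X$ in distribution, and assume there is a discrete set $E\subset\mathbb{R}$ (a set without accumulation points in $\mathbb{R}$) containing the ranges of $X$ and of all $X_n$. Let $F_n$ and $F$ be the distribution functions of $X_n$ and $X$. For $(m,n)\in\mathbb{N}^2$ let $X_n^1,\ldots,X_n^m$ be i.i.d. with distribution function $F_n$, and let $F_{m,n}(x)=\frac1m\sum_{i=1}^m\mathbb{1}\{X_n^i\le x\}$ be their empirical distribution function. Then \[ \lim_{n\to\infty}\sup_{x\in\mathbb{R}}|F_{n,n}(x)-F(x)|=0\quad P\text{-a.s.} \] *)

(* Defs.v *)
From HB Require Import structures.
From mathcomp Require Import all_boot all_order all_algebra.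
From mathcomp Require Import all_classical all_reals all_analysis.
Set Implicit Arguments. Unset Strict Implicit. Unset Printing Implicit Defensive.
Import Order.TTheory GRing.Theory Num.Theory.
Import numFieldNormedType.Exports.
Local Open Scope classical_set_scope.
Local Open Scope ring_scope.

Definition discrete_set (R : realType) (E : set R) : Prop :=
  forall x : R, exists2 e : R, 0 < e & forall y, E y -> `|y - x| < e -> y = x.

Definition distr_fun d (T : measurableType d) (R : realType)
  (P : probability T R) (X : {RV P >-> R}) (x : R) : R := fine (cdf X x).

Definition cvg_in_distribution d (T : measurableType d) (R : realType)
  (P : probability T R) (Xn : nat -> {RV P >-> R}) (X : {RV P >-> R}) : Prop :=
  forall x : R, {for x, continuous (distr_fun X)} ->
    distr_fun (Xn n) x @[n --> \oo] --> distr_fun X x.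

Definition mutually_independent d (T : measurableType d) (R : realType)
  (P : probability T R) (m : nat) (Y : nat -> {RV P >-> R}) : Prop :=
  forall (J : {set 'I_m}) (B : 'I_m -> set R), (forall i, measurable (B i)) ->
    P (\bigcap_(i in [set i | i \in J]) (Y i @^-1` B i)) =
    (\prod_(i in J) P (Y i @^-1` B i))%E.

Definition empirical_df d (T : measurableType d) (R : realType)
  (P : probability T R) (m : nat) (Y : nat -> {RV P >-> R}) (w : T) (x : R) : R :=
  (m%:R)^-1 * \sum_(i < m) (((Y i w <= x)%R)%:R : R).

(* Main.v *)
Require Import Defs.
From HB Require Import structures.
From mathcomp Require Import all_boot all_order all_algebra.
From mathcomp Require Import all_classical all_reals all_analysis.
From mathcomp Require Import ring lra zify.
Import Order.TTheory GRing.Theory Num.Theory.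
Import numFieldNormedType.Exports.
Local Open Scope classical_set_scope.
Local Open Scope ring_scope.
Set Implicit Arguments. Unset Strict Implicit. Unset Printing Implicit Defensive.

Definition Wb (R : realFieldType) (p : R) n k : R :=
  'C(n,k)%:R * p ^+ k * (1 - p) ^+ (n - k).

Lemma Wb_rec (R : realFieldType) (p : R) n k :
  Wb p n.+1 k.+1 = p * Wb p n k + (1 - p) * Wb p n k.+1.
Proof.
rewrite /Wb binS natrD subSS.
case: (ltnP k n) => kn.
  have -> : (n - k = (n - k.+1).+1)%N by rewrite subnSK.
  rewrite !exprS; ring.
rewrite bin_small ?ltnS // (_ : n - k = 0)%N; last by apply/eqP; rewrite subn_eq0.
rewrite !exprS; ring.
Qed.

Lemma Wb0 (R : realFieldType) (p : R) n : Wb p n.+1 0 = (1 - p) * Wb p n 0.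
Proof. by rewrite /Wb !bin0 !subn0 exprS; ring. Qed.

Lemma Wb_big (R : realFieldType) (p : R) n k : (n < k)%N -> Wb p n k = 0.
Proof. by move=> nk; rewrite /Wb bin_small // !mul0r. Qed.

Definition Sb (R : realFieldType) (p : R) n (g : nat -> R) :=
  \sum_(k < n.+1) Wb p n k * g k.

Lemma Sb_rec (R : realFieldType) (p : R) n g :
  Sb p n.+1 g = (1 - p) * Sb p n g + p * Sb p n (fun k => g k.+1).
Proof.
rewrite /Sb big_ord_recl /=.
have E1 : \sum_(i < n.+1) Wb p n.+1 (bump 0 i) * g (bump 0 i) =
  p * \sum_(i < n.+1) Wb p n i * g i.+1 +
  (1 - p) * \sum_(i < n.+1) Wb p n i.+1 * g i.+1.
  rewrite !mulr_sumr -big_split /=; apply: eq_bigr => i _.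
  rewrite /bump /= add1n Wb_rec; ring.
have E2 : \sum_(i < n.+1) Wb p n i.+1 * g i.+1 =
   \sum_(i < n) Wb p n i.+1 * g i.+1.
  by rewrite big_ord_recr /= Wb_big // mul0r addr0.
have E3 : \sum_(i < n.+1) Wb p n i * g i =
   Wb p n 0 * g 0 + \sum_(i < n) Wb p n i.+1 * g i.+1.
  by rewrite big_ord_recl.
rewrite E1 E2 E3 Wb0; ring.
Qed.

Definition fb (R : realFieldType) (p : R) n (x : R) :=
  let q := 1 - p in let m := n%:R in
  (m * p - x) ^+ 4 + 6 * m * p * q * (m * p - x) ^+ 2
  + 4 * m * p * q * (q - p) * (m * p - x) + m * p * q * (1 + 3 * (m - 2) * p * q).

Lemma Sb_fourth (R : realFieldType) (p : R) n x :
  Sb p n (fun k => (k%:R - x) ^+ 4) = fb p n x.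
Proof.
elim: n x => [|n IH] x.
  rewrite /Sb big_ord1 /Wb /fb bin0 subn0 !expr0 /=; ring.
rewrite Sb_rec IH.
have -> : Sb p n (fun k => (k.+1%:R - x) ^+ 4) = Sb p n (fun k => (k%:R - (x - 1)) ^+ 4).
  by apply: eq_bigr => k _; rewrite mulrS; congr (_ * _); congr (_ ^+ _); ring.
rewrite IH /fb /= mulrS; ring.
Qed.

Lemma fb_bound (R : realFieldType) (p : R) n : 0 <= p <= 1 -> (0 < n)%N ->
  fb p n (n%:R * p) <= n%:R ^+ 2.
Proof.
move=> /andP[p0 p1] n0.
have n1 : 1 <= n%:R :> R by rewrite ler1n.
have -> : fb p n (n%:R * p) =
  n%:R * (p * (1 - p)) * (1 + 3 * (n%:R - 2) * (p * (1 - p))) by rewrite /fb; ring.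
set m := n%:R in n1 *.
set u := p * (1 - p).
have u0 : 0 <= u by apply: mulr_ge0 => //; lra.
have u1 : u <= 1/4 by rewrite /u; have := sqr_ge0 (p - 1/2); nra.
have h1 : m * u <= m / 4 by nra.
have h2 : u * u <= 1/16 by nra.
have h3 : m * (m - 2) * (u * u) <= m * m * (u * u) by nra.
have h4 : m * m * (u * u) <= m * m / 16 by nra.
have -> : m * u * (1 + 3 * (m - 2) * u) = m * u + 3 * (m * (m - 2) * (u * u)) by ring.
rewrite expr2; nra.
Qed.
Lemma sum_sets_card (R : realFieldType) n (f : nat -> R) :
  \sum_(J : {set 'I_n}) f #|J| = \sum_(k < n.+1) 'C(n,k)%:R * f k.
Proof.
rewrite (partition_big (fun J : {set 'I_n} => (inord #|J| : 'I_n.+1)) predT) //=.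
apply: eq_bigr => k _.
have cJ (J : {set 'I_n}) : (#|J| <= n)%N by rewrite -[X in (_ <= X)%N]card_ord max_card.
transitivity (\sum_(J : {set 'I_n} | J \in [set J : {set 'I_n} | #|J| == k]%SET) f k).
  apply: eq_big => J.
    rewrite inE; apply/eqP/eqP => [<-|->]; first by rewrite inordK // ltnS.
    by apply: val_inj; rewrite /= inordK // ltnS.
  by move/eqP <-; rewrite inordK // ltnS.
by rewrite sumr_const card_draws card_ord mulr_natl.
Qed.

Definition Bset (R : realType) n (J : {set 'I_n}) (t : R) (i : 'I_n) : set R :=
  if i \in J then `]-oo, t]%classic else `]t, +oo[%classic.

Definition Cset d (T : measurableType d) (R : realType) (P : probability T R) n
  (Y : nat -> {RV P >-> R}) (t : R) (J : {set 'I_n}) : set T :=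
  \bigcap_(i in [set i | i \in [set: 'I_n]%SET]) (Y i @^-1` Bset J t i).

Lemma CsetP d (T : measurableType d) (R : realType) (P : probability T R) n
  (Y : nat -> {RV P >-> R}) (t : R) (J : {set 'I_n}) w :
  Cset Y t J w <-> forall i : 'I_n, (Y i w <= t) = (i \in J).
Proof.
split.
  move=> H i; have hi : [set` [set: 'I_n]%SET] i by rewrite /= inE.
  have := H i hi; rewrite /Bset /=.
  by case: (i \in J) => /=; rewrite in_itv /= ?andbT => h; [rewrite h | rewrite leNgt h].
move=> H i _; rewrite /Bset /= -H.
by case: ifPn; rewrite /= in_itv /= ?andbT // -ltNge.
Qed.

Lemma measurable_Cset d (T : measurableType d) (R : realType) (P : probability T R) n
  (Y : nat -> {RV P >-> R}) (t : R) (J : {set 'I_n}) : measurable (Cset Y t J).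
Proof.
apply: fin_bigcap_measurable; first exact: finite_finset.
by move=> i _; apply: measurable_funPTI; rewrite /Bset; case: ifP.
Qed.

Lemma P_Cset d (T : measurableType d) (R : realType) (P : probability T R) n
  (Y : nat -> {RV P >-> R}) (t p : R) (J : {set 'I_n}) :
  mutually_independent n Y ->
  (forall i, (i < n)%N -> P (Y i @^-1` `]-oo, t]) = p%:E) ->
  P (Cset Y t J) = (p ^+ #|J| * (1 - p) ^+ (n - #|J|))%:E.
Proof.
move=> hind hp.
rewrite /Cset hind; last by move=> i; rewrite /Bset; case: ifP.
have E (i : 'I_n) : P (Y i @^-1` Bset J t i) = (if i \in J then p else 1 - p)%:E.
  rewrite /Bset; case: ifP => _; first exact: hp.
  have -> : Y i @^-1` `]t, +oo[ = ~` (Y i @^-1` `]-oo, t]).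
    apply/seteqP; split => w /=; rewrite !in_itv /= ?andbT.
      by move=> tw; apply/negP; rewrite -ltNge.
    by move/negP; rewrite -ltNge.
  by rewrite probability_setC ?hp //; apply: measurable_funPTI.
under eq_bigr do rewrite E.
rewrite prodEFin; congr (_%:E).
rewrite (eq_bigl (fun i => true)); last by move=> i; rewrite finset.in_setT.
rewrite (bigID (fun i => i \in J)) /=.
rewrite (eq_bigl (fun i => i \in ~: J) (fun i => if i \in J then p else 1 - p)
   (P1 := fun i => ~~ (i \in J))); last first.
  by move=> i; rewrite finset.in_setC.
rewrite (eq_bigr (fun _ => p)); last by move=> i ->.
rewrite [X in _ * X](eq_bigr (fun _ => 1 - p)); last by move=> i; rewrite !inE => /negbTE ->.
rewrite !prodr_const; congr (_ * _ ^+ _).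
by rewrite cardsCs finset.setCK card_ord.
Qed.

Lemma pow4_le (R : realFieldType) (a b : R) : 0 <= a -> a <= `|b| -> a ^+ 4 <= b ^+ 4.
Proof.
move=> a0 ab.
have h2 : a ^+ 2 <= b ^+ 2.
  rewrite -[b ^+ 2]real_normK ?num_real // !expr2; apply: ler_pM => //.
have -> : a ^+ 4 = (a ^+ 2) ^+ 2 by rewrite -exprM.
have -> : b ^+ 4 = (b ^+ 2) ^+ 2 by rewrite -exprM.
rewrite [X in X <= _]expr2 [X in _ <= X]expr2; apply: ler_pM => //; exact: sqr_ge0.
Qed.

Definition badJ (R : realType) n (p eps : R) : pred {set 'I_n} :=
  fun J => eps <= `| #|J|%:R / n%:R - p |.
Arguments badJ {R} n p eps.

Definition Uset d (T : measurableType d) (R : realType) (P : probability T R) (n : nat)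
  (Y : nat -> {RV P >-> R}) (t p eps : R) : set T :=
  \big[setU/set0]_(J <- enum (badJ n p eps)) Cset Y t J.

Lemma measure_bigU_seq d (T : measurableType d) (R : realType)
  (mu : {measure set T -> \bar R}) (I : Type) (s : seq I) (A : I -> set T) :
  (forall i, measurable (A i)) ->
  measurable (\big[setU/set0]_(i <- s) A i) /\
  (mu (\big[setU/set0]_(i <- s) A i) <= \sum_(i <- s) mu (A i))%E.
Proof.
move=> mA; elim: s => [|x s [ms IH]]; first by rewrite !big_nil measure0.
rewrite !big_cons; split; first exact: measurableU.
by apply: le_trans (measureU2 _ _ _) _ => //; apply: leeD.
Qed.

Lemma measurable_Uset d (T : measurableType d) (R : realType) (P : probability T R) (n : nat)
  (Y : nat -> {RV P >-> R}) (t p eps : R) : measurable (Uset n Y t p eps).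
Proof. by case: (measure_bigU_seq P (enum (badJ n p eps)) (@measurable_Cset _ _ _ P n Y t)). Qed.

Lemma tail_bound d (T : measurableType d) (R : realType) (P : probability T R) (n : nat)
  (Y : nat -> {RV P >-> R}) (t p eps : R) :
  (0 < n)%N -> 0 < eps -> 0 <= p <= 1 ->
  mutually_independent n Y ->
  (forall i, (i < n)%N -> P (Y i @^-1` `]-oo, t]) = p%:E) ->
  (P (Uset n Y t p eps) <= (n%:R ^+ 2 / (n%:R * eps) ^+ 4)%:E)%E.
Proof.
move=> n0 eps0 p01 hind hp.
have [_ h] := measure_bigU_seq P (enum (badJ n p eps)) (@measurable_Cset _ _ _ P n Y t).
apply: le_trans h _; rewrite big_enum /=.
under eq_bigr do rewrite (@P_Cset _ _ _ P n Y t p _ hind hp).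
rewrite sumEFin lee_fin.
have nR : 0 < n%:R :> R by rewrite ltr0n.
set c := ((n%:R * eps) ^+ 4)^-1.
have c0 : 0 <= c by rewrite invr_ge0 exprn_ge0 // mulr_ge0 // ltW.
have w0 k : 0 <= p ^+ k * (1 - p) ^+ (n - k).
  by case/andP: p01 => p0 p1; rewrite mulr_ge0 // exprn_ge0 // subr_ge0.
apply: (@le_trans _ _ (\sum_(J : {set 'I_n})
   (p ^+ #|J| * (1 - p) ^+ (n - #|J|)) * ((#|J|%:R - n%:R * p) ^+ 4 * c))).
  rewrite [X in X <= _]big_mkcond /=; apply: ler_sum => J _.
  case: ifPn => hJ; last by rewrite mulr_ge0 // mulr_ge0 // exprn_even_ge0.
  rewrite ler_peMr //.
  rewrite /c ler_pdivlMr; last by rewrite exprn_gt0 // mulr_gt0.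
  rewrite mul1r; apply: pow4_le; first by rewrite mulr_ge0 // ltW.
  have -> : #|J|%:R - n%:R * p = n%:R * (#|J|%:R / n%:R - p).
    by rewrite mulrBr mulrCA divff ?mulr1 // gt_eqF.
  by rewrite normrM gtr0_norm // ler_pM2l.
rewrite (sum_sets_card n (fun k => p ^+ k * (1 - p) ^+ (n - k) * ((k%:R - n%:R * p) ^+ 4 * c))).
have -> : \sum_(k < n.+1) 'C(n, k)%:R * (p ^+ k * (1 - p) ^+ (n - k) * ((k%:R - n%:R * p) ^+ 4 * c))
   = Sb p n (fun k => (k%:R - n%:R * p) ^+ 4) * c.
  by rewrite /Sb mulr_suml; apply: eq_bigr => k _; rewrite /Wb; ring.
rewrite Sb_fourth mulrC [X in _ <= X]mulrC ler_wpM2l //.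
exact: fb_bound.
Qed.

Lemma series_inv_sq (R : realType) (c : R) : 0 <= c ->
  (\sum_(n <oo) ((if n is 0 then 0 else c / (n%:R ^+ 2))%R)%:E < +oo)%E.
Proof.
move=> c0.
set v := fun n : nat => (if n is 0 then 0 else c / (n%:R ^+ 2)) : R.
have v0 n : 0 <= v n by case: n => // n; rewrite /v divr_ge0 // exprn_ge0.
have partial N : \sum_(0 <= k < N.+1) v k <= 2 * c - 2 * c / N.+1%:R.
  elim: N => [|N IH]; first by rewrite big_nat1 /v divr1 subrr.
  rewrite big_nat_recr //=; apply: le_trans (lerD IH (lexx _)) _.
  rewrite /v.
  set m : R := N.+1%:R.
  have m1 : 1 <= m by rewrite /m ler1n.
  have -> : N.+2%:R = m + 1 by rewrite /m -addn1 natrD.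
  have e : 2 * c - 2 * c / (m + 1) - (2 * c - 2 * c / m + c / m ^+ 2)
       = c * (m - 1) / (m ^+ 2 * (m + 1)).
    by field; apply/andP; split; rewrite gt_eqF //; lra.
  rewrite -subr_ge0 e divr_ge0 // ?mulr_ge0 // ?subr_ge0 // ?exprn_ge0; lra.
have sumE : (\sum_(n <oo) (v n)%:E =
    ereal_sup (range (fun N => \sum_(0 <= k < N) (v k)%:E)))%E.
  apply/cvg_lim => //; apply: ereal_nondecreasing_cvgn.
  by apply: ereal_nondecreasing_series => n _ _; rewrite lee_fin.
rewrite -/v sumE; apply: (@le_lt_trans _ _ (2 * c)%:E); last exact: ltry.
apply: ge_ereal_sup => _ [N _ <-].
case: N => [|N]; first by rewrite big_geq // lee_fin mulr_ge0.
rewrite sumEFin lee_fin; apply: le_trans (partial N) _.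
by rewrite gerBl divr_ge0 // mulr_ge0.
Qed.

Lemma aeP d (T : measurableType d) (R : realType) (P : probability T R) (Q : T -> Prop) :
  (exists A, [/\ measurable A, P A = 0 & forall w, ~ A w -> Q w]) ->
  {ae P, forall w, Q w}.
Proof.
move=> [A [mA PA H]]; exists A; split => // w /= nQ.
by apply: contrapT => nA; apply: nQ; apply: H.
Qed.

Lemma ae_forall_nat d (T : measurableType d) (R : realType) (P : probability T R)
  (Q : nat -> T -> Prop) :
  (forall k, {ae P, forall w, Q k w}) -> {ae P, forall w, forall k, Q k w}.
Proof.
move=> H.
have : P.-negligible (\bigcup_k ~` [set w | Q k w]) by apply: negligible_bigcup => k; exact: H k.
case=> A [mA PA sA]; exists A; split => // w /= nQ; apply: sA.
by apply: contrapT => h; apply: nQ => k; apply: contrapT => nk; apply: h; exists k.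
Qed.

Lemma ae_impl d (T : measurableType d) (R : realType) (P : probability T R)
  (Q1 Q2 : T -> Prop) :
  (forall w, Q1 w -> Q2 w) -> {ae P, forall w, Q1 w} -> {ae P, forall w, Q2 w}.
Proof.
move=> H [A [mA PA sA]]; exists A; split => // w /= nQ; apply: sA => /= q1.
exact/nQ/H.
Qed.

Lemma mem_bigsetU_seq (I : eqType) T (s : seq I) (A : I -> set T) x w :
  x \in s -> A x w -> (\big[setU/set0]_(i <- s) A i) w.
Proof.
elim: s => // y s IH; rewrite in_cons big_cons => /orP[/eqP <- Ax|xs Ax].
  by left.
by right; apply: IH.
Qed.

Lemma emp_card d (T : measurableType d) (R : realType) (P : probability T R) n
  (Y : nat -> {RV P >-> R}) w t :
  empirical_df n Y w t = #|[set i : 'I_n | Y i w <= t]%SET|%:R / n%:R.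
Proof.
rewrite /empirical_df mulrC; congr (_ * _).
rewrite -sum1_card natr_sum [RHS]big_mkcond /=; apply: eq_bigr => i _.
by rewrite inE; case: (Y i w <= t).
Qed.

Lemma LLN_eps d (T : measurableType d) (R : realType) (P : probability T R)
  (Y : nat -> nat -> {RV P >-> R}) (p : nat -> R) (t eps : R) :
  0 < eps ->
  (forall n, mutually_independent n (Y n)) ->
  (forall n i, (i < n)%N -> P (Y n i @^-1` `]-oo, t]) = (p n)%:E) ->
  {ae P, forall w, \forall n \near \oo, `|empirical_df n (Y n) w t - p n| < eps}.
Proof.
move=> eps0 hind hp.
have p01 n : (0 < n)%N -> 0 <= p n <= 1.
  move=> n0; have e := hp n 0%N n0.
  have h1 : (0 <= (p n)%:E)%E by rewrite -e; exact: measure_ge0.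
  have h2 : ((p n)%:E <= 1)%E.
    by rewrite -e; apply: probability_le1; exact: measurable_funPTI.
  by move: h1 h2; rewrite !lee_fin => -> ->.
set U := fun n : nat => if n is 0 then set0 else Uset n (Y n) t (p n) eps.
have mU n : measurable (U n) by case: n => [|n]; [exact: measurable0 | exact: measurable_Uset].
apply: aeP; exists (lim_sup_set U); split.
- rewrite /lim_sup_set; apply: bigcapT_measurable => k.
  by apply: bigcup_measurable => j _; exact: mU.
- apply: lim_sup_set_cvg0 => //.
  have c0 : 0 <= (eps ^+ 4)^-1 by rewrite invr_ge0 exprn_ge0 // ltW.
  apply: le_lt_trans (series_inv_sq c0).
  apply: lee_nneseries => [i _ _|n _]; first exact: measure_ge0.
  case: n => [|n]; first by rewrite /U measure0.
  apply: le_trans (@tail_bound _ _ _ P n.+1 (Y n.+1) t (p n.+1) eps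
    (ltn0Sn n) eps0 (p01 _ (ltn0Sn n)) (hind n.+1) (hp n.+1)) _.
  rewrite lee_fin le_eqVlt; apply/orP; left; apply/eqP.
  by rewrite exprMn; field; rewrite ?gt_eqF // ?exprn_gt0 // ltr0n.
- move=> w nA.
  have [N HN] : exists N, forall j, (N <= j)%N -> ~ U j w.
    apply: contrapT => hc; apply: nA => N _; apply: contrapT => hN; apply: hc.
    by exists N => j Nj Uj; apply: hN; exists j.
  exists N.+1 => // n /= Nn.
  rewrite ltNge; apply/negP => bad.
  apply: (HN n (ltnW Nn)).
  case: n Nn bad => // n _ bad.
  apply: (@mem_bigsetU_seq _ _ _ _ [set i : 'I_n.+1 | Y n.+1 i w <= t]%SET).
    by rewrite mem_enum /badJ; move: bad; rewrite emp_card.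
  by apply/CsetP => i; rewrite inE.
Qed.

Lemma LLN d (T : measurableType d) (R : realType) (P : probability T R)
  (Y : nat -> nat -> {RV P >-> R}) (p : nat -> R) (t : R) :
  (forall n, mutually_independent n (Y n)) ->
  (forall n i, (i < n)%N -> P (Y n i @^-1` `]-oo, t]) = (p n)%:E) ->
  {ae P, forall w, (empirical_df n (Y n) w t - p n) @[n --> \oo] --> (0 : R)}.
Proof.
move=> hind hp.
have kpos k : 0 < (k.+1%:R : R)^-1 by rewrite invr_gt0 ltr0n.
apply: ae_impl (ae_forall_nat (fun k => @LLN_eps _ _ _ P Y p t k.+1%:R^-1 (kpos k) hind hp)).
move=> w H; apply/cvgr0Pnorm_lt => e e0.
have [K _ HK] := near_infty_natSinv_lt (PosNum e0).
apply: filterS (H K) => n hn; apply: lt_trans hn _.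
exact: (HK K (leqnn K)).
Qed.

Lemma df_P d (T : measurableType d) (R : realType) (P : probability T R)
  (Z : {RV P >-> R}) x : P (Z @^-1` `]-oo, x]) = (distr_fun Z x)%:E.
Proof.
rewrite /distr_fun fineK //; last by rewrite fin_num_measure.
Qed.

Lemma df_ge0 d (T : measurableType d) (R : realType) (P : probability T R)
  (Z : {RV P >-> R}) x : 0 <= distr_fun Z x.
Proof. by rewrite -lee_fin -df_P measure_ge0. Qed.

Lemma df_le1 d (T : measurableType d) (R : realType) (P : probability T R)
  (Z : {RV P >-> R}) x : distr_fun Z x <= 1.
Proof.
by rewrite -lee_fin -df_P; apply: probability_le1; exact: measurable_funPTI.
Qed.

Lemma df_mono d (T : measurableType d) (R : realType) (P : probability T R)
  (Z : {RV P >-> R}) x y : x <= y -> distr_fun Z x <= distr_fun Z y.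
Proof.
move=> xy; rewrite -lee_fin -!df_P; apply: le_measure; rewrite ?inE.
- exact: measurable_funPTI.
- exact: measurable_funPTI.
- by move=> w /=; rewrite !in_itv /= => /le_trans; apply.
Qed.

Lemma df_eq d (T : measurableType d) (R : realType) (P : probability T R)
  (Z : {RV P >-> R}) x y : x <= y -> (forall w, ~ (x < Z w <= y)) ->
  distr_fun Z y = distr_fun Z x.
Proof.
move=> xy H; apply/eqP; rewrite -(@eqe R) -!df_P; apply/eqP; congr (P _).
apply/seteqP; split => w /=; rewrite !in_itv /=.
  by move=> wy; rewrite leNgt; apply/negP => xw; apply: (H w); rewrite xw wy.
by move=> wx; apply: le_trans wx xy.
Qed.

Lemma emp_ge0 d (T : measurableType d) (R : realType) (P : probability T R) n
  (Y : nat -> {RV P >-> R}) w x : 0 <= empirical_df n Y w x.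
Proof. by rewrite emp_card divr_ge0. Qed.

Lemma emp_le1 d (T : measurableType d) (R : realType) (P : probability T R) n
  (Y : nat -> {RV P >-> R}) w x : empirical_df n Y w x <= 1.
Proof.
rewrite emp_card; case: n Y => [|n] Y; first by rewrite invr0 mulr0.
rewrite ler_pdivrMr ?ltr0n // mul1r ler_nat.
by rewrite -[X in (_ <= X)%N](card_ord n.+1) max_card.
Qed.

Lemma emp_mono d (T : measurableType d) (R : realType) (P : probability T R) n
  (Y : nat -> {RV P >-> R}) w x y : x <= y -> empirical_df n Y w x <= empirical_df n Y w y.
Proof.
move=> xy; rewrite !emp_card ler_wpM2r ?invr_ge0 // ler_nat subset_leq_card //.
by apply/fintype.subsetP => i; rewrite !inE => /le_trans; apply.
Qed.

Lemma emp_eq d (T : measurableType d) (R : realType) (P : probability T R) n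
  (Y : nat -> {RV P >-> R}) w x y : x <= y ->
  (forall i, (i < n)%N -> ~ (x < Y i w <= y)) ->
  empirical_df n Y w y = empirical_df n Y w x.
Proof.
move=> xy H; rewrite !emp_card; congr (_%:R / _); apply: eq_card => i; rewrite !inE.
apply/idP/idP => [iy|/le_trans]; last by apply.
rewrite leNgt; apply/negP => xi; apply: (H i (ltn_ord i)); by rewrite xi iy.
Qed.

Lemma df_flat d (T : measurableType d) (R : realType) (P : probability T R)
  (E : set R) (Z : {RV P >-> R}) (x e : R) :
  (forall y, E y -> `|y - x| < e -> y = x) -> range Z `<=` E ->
  forall y, x <= y < x + e -> distr_fun Z y = distr_fun Z x.
Proof.
move=> He rZ y /andP[xy ye]; apply: df_eq => // w /andP[xw wy].
have Ew : E (Z w) by apply: rZ; exists w.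
have : Z w = x.
  apply: He => //; rewrite gtr0_norm ?subr_gt0 //.
  by rewrite ltrBlDl; apply: le_lt_trans wy ye.
by move=> zx; move: xw; rewrite zx ltxx.
Qed.

Lemma df_cvg_all d (T : measurableType d) (R : realType) (P : probability T R)
  (Xn : nat -> {RV P >-> R}) (X : {RV P >-> R}) (E : set R) :
  discrete_set E -> range X `<=` E -> (forall n, range (Xn n) `<=` E) ->
  cvg_in_distribution Xn X ->
  forall x, distr_fun (Xn n) x @[n --> \oo] --> distr_fun X x.
Proof.
move=> dE rX rXn hcv x.
have [e e0 He] := dE x.
set x' := x + e / 2.
have hx' : x <= x' < x + e.
  rewrite /x' lerDl ltrD2l; apply/andP; split; first by rewrite divr_ge0 // ltW.
  by rewrite ltr_pdivrMr // ltr_pMr // ltr1n.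
have cont : {for x', continuous (distr_fun X)}.
  apply/cvgrPdist_le => eps eps0; apply/nbhs_ballP; exists (e / 2) => /=.
    by rewrite divr_gt0.
  move=> y hy; rewrite /ball_ /= in hy.
  have [hy1 hy2] : y - e / 2 < x' /\ x' < y + e / 2.
    by move: hy; rewrite ltr_distl => /andP[].
  have hyx : x <= y < x + e by rewrite /x' in hy1 hy2; apply/andP; split; lra.
  by rewrite (df_flat He rX hx') (df_flat He rX hyx) subrr normr0 ltW.
have := hcv x' cont.
rewrite (df_flat He rX hx').
by under eq_fun do rewrite (df_flat He (rXn _) hx').
Qed.

Lemma finite_E_seg (R : realType) (E : set R) (a b : R) :
  discrete_set E -> exists s : seq R, forall y, E y -> a <= y <= b -> y \in s.
Proof.
move=> dE.
have [eF heF] := choice (fun x => match dE x with ex_intro2 e e0 He => ex_intro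
  (fun e => 0 < e /\ forall y, E y -> `|y - x| < e -> y = x) e (conj e0 He) end).
have cpt := @segment_compact R a b; rewrite compact_cover in cpt.
have [D' _ cov] : finite_subset_cover `[a, b]%classic (fun x => ball x (eF x)) `[a, b]%classic.
  apply: cpt => [x _|y m]; first exact: ball_open.
  by exists y => //; apply: ballxx; exact: (proj1 (heF y)).
exists (finmap.enum_fset D') => y Ey yab.
have : `[a, b]%classic y by rewrite /= in_itv /= yab.
move=> /cov [x Dx bxy].
have -> : y = x.
  by apply: (proj2 (heF x)) => //; rewrite distrC; exact: bxy.
exact: Dx.
Qed.

Lemma df_left d (T : measurableType d) (R : realType) (P : probability T R)
  (Z : {RV P >-> R}) (eps : R) : 0 < eps -> exists a, distr_fun Z a <= eps.
Proof.
move=> eps0.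
have := cvg_cdfNy0 Z; move/fine_cvgP => [_ h].
move/cvgrPdist_le: h => /(_ eps eps0) [M [_ HM]].
exists (M - 1); have := HM (M - 1); rewrite ltrBlDr ltrDl ltr01 => /(_ isT) /=.
by rewrite sub0r normrN => /(le_trans (ler_norm _)).
Qed.

Lemma df_right d (T : measurableType d) (R : realType) (P : probability T R)
  (Z : {RV P >-> R}) (eps : R) : 0 < eps -> exists b, 1 - eps <= distr_fun Z b.
Proof.
move=> eps0.
have := cvg_cdfy1 Z; move/fine_cvgP => [_ h].
move/cvgrPdist_le: h => /(_ eps eps0) [M [_ HM]].
exists (M + 1); have := HM (M + 1); rewrite ltrDl ltr01 => /(_ isT) /=.
move=> h; have := ler_norm (1 - distr_fun Z (M + 1)); lra.
Qed.

Lemma null_gap d (T : measurableType d) (R : realType) (P : probability T R)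
  (Z W : {RV P >-> R}) (E : set R) (t u : R) :
  distr_fun W = distr_fun Z -> range Z `<=` E -> (forall y, E y -> ~ (t < y < u)) ->
  {ae P, forall w, ~ (t < W w < u)}.
Proof.
move=> hWZ rZ hE.
have zero s : s < u -> P (W @^-1` `]t, s]) = 0.
  move=> su; have [st|ts] := leP s t.
    rewrite (_ : _ @^-1` _ = set0) ?measure0 //; apply/seteqP; split => // w /=.
    by rewrite in_itv /= => /andP[tw ws]; have := lt_le_trans tw (le_trans ws st); rewrite ltxx.
  have -> : W @^-1` `]t, s] = W @^-1` `]-oo, s] `\` W @^-1` `]-oo, t].
    apply/seteqP; split => w /=; rewrite !in_itv /= ?andbT.
      by move=> /andP[tw ->]; split => //; apply/negP; rewrite -ltNge.
    by move=> [-> /negP]; rewrite -ltNge => ->.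
  rewrite measureD; [|exact: measurable_funPTI|exact: measurable_funPTI|].
    have -> : W @^-1` `]-oo, s] `&` W @^-1` `]-oo, t] = W @^-1` `]-oo, t].
      apply/seteqP; split => w /=; rewrite !in_itv /=; first by case.
      by move=> wt; split => //; apply: le_trans wt (ltW ts).
    rewrite [X in (X - _)%E](_ : _ = (distr_fun W s)%:E); last exact: df_P.
    rewrite [X in (_ - X)%E](_ : _ = (distr_fun W t)%:E); last exact: df_P.
    rewrite hWZ (@df_eq _ _ _ _ Z t s (ltW ts)) ?subee //.
    move=> w /andP[tw ws]; apply: (hE (Z w)); first by apply: rZ; exists w.
    by rewrite tw (le_lt_trans ws su).
  by rewrite -ge0_fin_numE // fin_num_measure //; exact: measurable_funPTI.
apply: aeP; exists (W @^-1` `]t, u[); split.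
- exact: measurable_funPTI.
- have -> : W @^-1` `]t, u[ = \bigcup_m (W @^-1` `]t, u - m.+1%:R^-1]).
    apply/seteqP; split => w /=; rewrite in_itv /=.
      move=> /andP[tw wu].
      have uw : 0 < u - W w by rewrite subr_gt0.
      exists (Num.truncn (u - W w)^-1) => //=; rewrite in_itv /= tw /=.
      have hk := truncnS_gt (u - W w)^-1.
      have h2 : (Num.truncn (u - W w)^-1).+1%:R^-1 < u - W w.
        by rewrite -invf_plt ?posrE ?ltr0n.
      by rewrite lerBrDr addrC -lerBrDr; exact: ltW.
    move=> [m _] /=; rewrite in_itv /= => /andP[-> wu] /=.
    by apply: le_lt_trans wu _; rewrite gtrBl invr_gt0 ltr0n.
  apply/eqP; rewrite eq_le measure_ge0 andbT.
  apply: le_trans (generalized_Boole_inequality _ _ _) _.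
  + by move=> m; exact: measurable_funPTI.
  + by apply: bigcup_measurable => m _; exact: measurable_funPTI.
  + rewrite eseries0 // => m _ _; apply: zero.
    by rewrite gtrBl invr_gt0 ltr0n.
- by move=> w nw tu; apply: nw; rewrite /= in_itv /=.
Qed.

Lemma ae_true d (T : measurableType d) (R : realType) (P : probability T R) (Q : T -> Prop) :
  (forall w, Q w) -> {ae P, forall w, Q w}.
Proof. by move=> H; apply: aeP; exists set0; split => // w _; exact: H. Qed.

Lemma ae_and d (T : measurableType d) (R : realType) (P : probability T R) (Q1 Q2 : T -> Prop) :
  {ae P, forall w, Q1 w} -> {ae P, forall w, Q2 w} -> {ae P, forall w, Q1 w /\ Q2 w}.
Proof.
move=> h1 h2.
have := @ae_forall_nat _ _ _ P (fun k w => if k is 0 then Q1 w else Q2 w).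
move=> /(_ _) H; apply: ae_impl (H _) => [w h|[|k] //]; first by split; [exact: (h 0%N) | exact: (h 1%N)].
Qed.

Lemma seq_max (R : realType) (s : seq R) (x a : R) : a \in s -> a <= x ->
  exists t, [/\ t \in s, t <= x & forall y, y \in s -> y <= x -> y <= t].
Proof.
elim: s a => // y s IH a; rewrite in_cons => ha ax.
have [[z zs zx]|nz] := pselect (exists2 z, z \in s & z <= x).
  have [t [ts tx tm]] := IH z zs zx.
  have [yx|xy] := leP y x.
    have [ty|yt] := leP t y.
      exists y; split => //; first by rewrite in_cons eqxx.
      move=> v; rewrite in_cons => /orP[/eqP -> //|vs vx]; exact: le_trans (tm v vs vx) ty.
    exists t; split => //; first by rewrite in_cons ts orbT.
    by move=> v; rewrite in_cons => /orP[/eqP -> _|vs vx]; [exact: ltW|exact: tm].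
  exists t; split => //; first by rewrite in_cons ts orbT.
  move=> v; rewrite in_cons => /orP[/eqP -> yx|vs vx]; last exact: tm.
  by move: xy; rewrite ltNge yx.
have ay : a = y.
  case/orP: ha => [/eqP //|hs]; by exfalso; apply: nz; exists a.
exists y; split; [by rewrite in_cons eqxx|by rewrite -ay|].
move=> v; rewrite in_cons => /orP[/eqP -> //|vs vx].
by exfalso; apply: nz; exists v.
Qed.

Lemma seq_min (R : realType) (s : seq R) (x b : R) : b \in s -> x < b ->
  exists u, [/\ u \in s, x < u & forall y, y \in s -> x < y -> u <= y].
Proof.
elim: s b => // y s IH b; rewrite in_cons => hb xb.
have [[z zs zx]|nz] := pselect (exists2 z, z \in s & x < z).
  have [t [ts tx tm]] := IH z zs zx.
  have [xy|yx] := ltP x y.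
    have [yt|ty] := leP y t.
      exists y; split => //; first by rewrite in_cons eqxx.
      move=> v; rewrite in_cons => /orP[/eqP -> //|vs vx]; exact: le_trans yt (tm v vs vx).
    exists t; split => //; first by rewrite in_cons ts orbT.
    by move=> v; rewrite in_cons => /orP[/eqP -> _|vs vx]; [exact: ltW|exact: tm].
  exists t; split => //; first by rewrite in_cons ts orbT.
  move=> v; rewrite in_cons => /orP[/eqP -> xy|vs vx]; last exact: tm.
  by move: yx; rewrite leNgt xy.
have ay : b = y.
  case/orP: hb => [/eqP //|hs]; by exfalso; apply: nz; exists b.
exists y; split; [by rewrite in_cons eqxx|by rewrite -ay|].
move=> v; rewrite in_cons => /orP[/eqP -> //|vs vx].
by exfalso; apply: nz; exists v.
Qed.

Lemma final_det (R : realType) (E : set R) (F : R -> R) (G : nat -> R -> R)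
  (a b : nat -> R) (s : nat -> seq R) :
  (forall x, 0 <= F x <= 1) -> (forall x y, x <= y -> F x <= F y) ->
  (forall n x, 0 <= G n x <= 1) -> (forall n x y, x <= y -> G n x <= G n y) ->
  (forall t x, t <= x -> (forall y, E y -> ~ (t < y <= x)) -> F x = F t) ->
  (forall k, [/\ a k < b k, a k \in s k, b k \in s k, F (a k) <= k.+1%:R^-1 /\
      1 - k.+1%:R^-1 <= F (b k) & forall y, E y -> a k <= y <= b k -> y \in s k]) ->
  (forall k t, t \in s k -> G n t - F t @[n --> \oo] --> (0 : R)) ->
  (forall k t u, t \in s k -> u \in s k -> (forall y, E y -> ~ (t < y < u)) ->
      forall n x, t <= x < u -> G n x = G n t) ->
  sup (range (fun x => `|G n x - F x|)) @[n --> \oo] --> (0 : R).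
Proof.
move=> hF01 hFm hG01 hGm hFflat hgrid hconv hGflat.
apply/cvgr0Pnorm_le => e e0.
have e30 : 0 < e / 3 by rewrite divr_gt0.
have [K _ HK] := near_infty_natSinv_lt (PosNum e30).
have hK : K.+1%:R^-1 < e / 3 := HK K (leqnn K).
set eps : R := K.+1%:R^-1.
have eps0 : 0 < eps by rewrite invr_gt0 ltr0n.
have [hab has hbs [hFa hFb] hsE] := hgrid K; rewrite -/eps in hFa hFb.
set sK := s K in has hbs hsE.
have Hj : forall j : 'I_(size sK), \forall n \near \oo,
    `|G n (nth 0 sK j) - F (nth 0 sK j)| <= eps.
  move=> j; have := hconv K (nth 0 sK j) (mem_nth _ (ltn_ord j)).
  by move/cvgr0Pnorm_le => /(_ eps eps0).
have HJ : \forall n \near \oo, forall j : 'I_(size sK), `|G n (nth 0 sK j) - F (nth 0 sK j)| <= eps.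
  by apply: filter_forall.
apply: filterS HJ => n Hn.
have Hs t : t \in sK -> `|G n t - F t| <= eps.
  move=> ts; have hi : (index t sK < size sK)%N by rewrite index_mem.
  have := Hn (Ordinal hi).
  by rewrite /= nth_index.
have ub x : `|G n x - F x| <= 3 * eps.
  have [xa|ax] := ltP x (a K).
    have h1 := Hs _ has.
    have h2 := hGm n _ _ (ltW xa); have h3 := hFm _ _ (ltW xa).
    have h4 := hG01 n x; have h5 := hF01 x.
    move: h1; rewrite !ler_norml => /andP[h1 h1'].
    case/andP: h4 => h4 h4'; case/andP: h5 => h5 h5'.
    apply/andP; split; lra.
  have [bx|xb] := leP (b K) x.
    have h1 := Hs _ hbs.
    have h2 := hGm n _ _ bx; have h3 := hFm _ _ bx.
    have h4 := hG01 n x; have h5 := hF01 x.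
    move: h1; rewrite !ler_norml => /andP[h1 h1'].
    case/andP: h4 => h4 h4'; case/andP: h5 => h5 h5'.
    apply/andP; split; lra.
  have [t [ts tx tm]] := seq_max has ax.
  have [u [us xu um]] := seq_min hbs xb.
  have noE : forall y, E y -> ~ (t < y < u).
    move=> y Ey /andP[ty yu].
    have ab_y : a K <= y <= b K.
      apply/andP; split.
        by apply: le_trans (tm _ has ax) (ltW ty).
      by apply: le_trans (ltW yu) (um _ hbs xb).
    have ys := hsE y Ey ab_y.
    have [yx|xy] := leP y x.
      by have := tm y ys yx; rewrite leNgt ty.
    by have := um y ys xy; rewrite leNgt yu.
  rewrite (hGflat K t u ts us noE n x); last by rewrite tx xu.
  rewrite (hFflat t x tx); last first.
    move=> y Ey /andP[ty yx]; apply: (noE y Ey); rewrite ty /=.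
    exact: le_lt_trans yx xu.
  apply: le_trans (Hs _ ts) _; rewrite ler_peMl // ?ltW //; lra.
have ne : range (fun x => `|G n x - F x|) !=set0 by exists `|G n 0 - F 0|, 0.
have hub : has_ubound (range (fun x => `|G n x - F x|)).
  by exists (3 * eps) => _ [x _ <-]; exact: ub.
have s0 : 0 <= sup (range (fun x => `|G n x - F x|)).
  apply: le_trans (normr_ge0 (G n 0 - F 0)) _.
  by apply: ub_le_sup => //; exists 0.
rewrite ger0_norm //.
have hsup : sup (range (fun x => `|G n x - F x|)) <= 3 * eps.
  by apply: ge_sup => // _ [x _ <-]; exact: ub.
have : eps < e / 3 := hK.
lra.
Qed.

Theorem mainTheorem5 (d : measure_display) (T : measurableType d) (R : realType)
  (P : probability T R) (Xn : nat -> {RV P >-> R}) (X : {RV P >-> R})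
  (E : set R) (Xs : nat -> nat -> nat -> {RV P >-> R}) :
  discrete_set E ->
  range X `<=` E ->
  (forall n, range (Xn n) `<=` E) ->
  cvg_in_distribution Xn X ->
  (forall m n, mutually_independent m (Xs m n)) ->
  (forall m n i, (i < m)%N -> distr_fun (Xs m n i) = distr_fun (Xn n)) ->
  {ae P, forall w, 
    sup (range (fun x : R => `|empirical_df n (Xs n n) w x - distr_fun X x|))
      @[n --> \oo] --> (0 : R)}.
Proof.
move=> dE rX rXn hcv hind hdist.
have Fcvg := df_cvg_all dE rX rXn hcv.
have grid k : exists g : (R * R) * seq R,
  [/\ g.1.1 < g.1.2, g.1.1 \in g.2, g.1.2 \in g.2,
      distr_fun X g.1.1 <= k.+1%:R^-1 /\ 1 - k.+1%:R^-1 <= distr_fun X g.1.2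
    & forall y, E y -> g.1.1 <= y <= g.1.2 -> y \in g.2].
  have ek : 0 < k.+1%:R^-1 :> R by rewrite invr_gt0 ltr0n.
  have [a ha] := df_left X ek.
  have [b0 hb0] := df_right X ek.
  set b := Num.max b0 (a + 1).
  have [s hs] := finite_E_seg a b dE.
  exists ((a, b), a :: b :: s); split => /=.
  - by rewrite lt_max ltrDl ltr01 orbT.
  - by rewrite in_cons eqxx.
  - by rewrite !in_cons eqxx orbT.
  - split => //; apply: le_trans hb0 (df_mono X _); by rewrite le_max lexx.
  - by move=> y Ey hy; rewrite !in_cons (hs y Ey hy) !orbT.
have [g hg] := choice grid.
set Y := fun n => Xs n n.
have H1 : {ae P, forall w, forall k j,
   (empirical_df n (Y n) w (nth 0 (g k).2 j) - distr_fun (Xn n) (nth 0 (g k).2 j))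
     @[n --> \oo] --> (0 : R)}.
  apply: ae_forall_nat => k; apply: ae_forall_nat => j.
  apply: LLN => [n|n i ni]; first exact: hind.
  by rewrite df_P /Y hdist.
have H2 : {ae P, forall w, forall k j1 j2,
   (forall y, E y -> ~ (nth 0 (g k).2 j1 < y < nth 0 (g k).2 j2)) ->
   forall n i, (i < n)%N -> ~ (nth 0 (g k).2 j1 < Y n i w < nth 0 (g k).2 j2)}.
  apply: ae_forall_nat => k; apply: ae_forall_nat => j1; apply: ae_forall_nat => j2.
  have [hE|nE] := pselect (forall y, E y -> ~ (nth 0 (g k).2 j1 < y < nth 0 (g k).2 j2)).
    apply: ae_impl (_ : {ae P, forall w, forall n i, (i < n)%N ->
        ~ (nth 0 (g k).2 j1 < Y n i w < nth 0 (g k).2 j2)}) => [w h _ //|].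
    apply: ae_forall_nat => n; apply: ae_forall_nat => i.
    have [ni|ni] := ltnP i n.
      by apply: ae_impl (null_gap (hdist n n i ni) (rXn n) hE) => w h _.
    by apply: ae_true.
  by apply: ae_true => w /nE.
apply: ae_impl (ae_and H1 H2) => w [h1 h2].
apply: (@final_det R E (distr_fun X) (fun n x => empirical_df n (Y n) w x)
  (fun k => (g k).1.1) (fun k => (g k).1.2) (fun k => (g k).2)).
- by move=> x; rewrite df_ge0 df_le1.
- exact: df_mono.
- by move=> n x; rewrite emp_ge0 emp_le1.
- by move=> n x y; exact: emp_mono.
- move=> t x tx hE; apply: df_eq => // w' hw.
  by apply: (hE (X w')) => //; apply: rX; exists w'.
- exact: hg.
- move=> k t ts.
  have := h1 k (index t (g k).2); rewrite nth_index // => h.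
  have e : (fun n => empirical_df n (Y n) w t - distr_fun X t) =
      (fun n => (empirical_df n (Y n) w t - distr_fun (Xn n) t)
                + (distr_fun (Xn n) t - distr_fun X t)).
    by apply/funext => n; rewrite addrA subrK.
  rewrite e -[X in _ --> X]addr0.
  apply: cvgD => //.
  rewrite -(subrr (distr_fun X t)); apply: cvgB => //; exact: cvg_cst.
- move=> k t u ts us hE n x /andP[tx xu].
  apply: emp_eq => // i ni /andP[ti ix].
  have := h2 k (index t (g k).2) (index u (g k).2); rewrite !nth_index //.
  move=> /(_ hE n i ni); apply; rewrite ti /=; exact: le_lt_trans ix xu.
Qed.
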